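(* Let $\mathbb{X}$ be a set, $E\subset\mathbb{R}^{\mathbb{X}}$ a real vector subspace, $C=(E\cap[0,\infty)^{\mathbb{X}})\setminus\{0\}$, and $\Pi:E\to E/\mathcal{R}$ the canonical projection, where $f\mathcal{R}g$ iff $f=bg$ for some $b>0$. Let $\bar f\neq\bar g\in\Pi(C)$. Then: (1) there exist $f\in\bar f$, $g\in\bar g$ such that the intersection of the affine line through $f$ and $g$ with $C$ is a line segment $[u,v]$ with $u\neq v$. Fix such $f,g,u,v$. Then: (2) for any $h\in C$ lying in the vector plane spanned by $u$ and $v$ (equivalently by $f$ and $g$), the segment $[u,v]$ meets the vector line $\mathbb{R}h$ in a single point, which belongs to $C$; (3) for any $h\neq0$ in the vector plane spanned by $u,v$, writing $h=h_1u+h_2v$, one has $h\in C$ if and only if $h_1\ge0$ and $h_2\ge0$.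
   Context: Elements of $\Pi(C)$ are open half-lines $\{bf: b>0\}$, $f\in C$. *)

(* Defs.v *)
From Stdlib Require Import Reals.
Open Scope R_scope.

Definition fadd {X : Type} (f g : X -> R) : X -> R := fun x => f x + g x.
Definition fscal {X : Type} (a : R) (f : X -> R) : X -> R := fun x => a * f x.
Definition fzero {X : Type} : X -> R := fun _ => 0.

Definition is_subspace {X : Type} (E : (X -> R) -> Prop) : Prop :=
  E fzero /\
  (forall f g, E f -> E g -> E (fadd f g)) /\
  (forall a f, E f -> E (fscal a f)).

Definition cone {X : Type} (E : (X -> R) -> Prop) (f : X -> R) : Prop :=
  E f /\ (forall x, 0 <= f x) /\ f <> fzero.

Definition Rrel {X : Type} (f g : X -> R) : Prop :=
  exists b, 0 < b /\ f = fscal b g.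

Definition Pi {X : Type} (f : X -> R) : (X -> R) -> Prop := fun h => Rrel h f.

Definition aff_line {X : Type} (f g : X -> R) (h : X -> R) : Prop :=
  exists t, h = fadd (fscal (1 - t) f) (fscal t g).

Definition segment {X : Type} (u v : X -> R) (h : X -> R) : Prop :=
  exists s, 0 <= s <= 1 /\ h = fadd (fscal (1 - s) u) (fscal s v).

Definition span2 {X : Type} (u v : X -> R) (h : X -> R) : Prop :=
  exists a b, h = fadd (fscal a u) (fscal b v).

Definition vline {X : Type} (h : X -> R) (p : X -> R) : Prop :=
  exists l, p = fscal l h.

(* property (1) for f, g, u, v relative to the classes of f0, g0 *)
Definition good_config {X : Type} (E : (X -> R) -> Prop) (f0 g0 f g u v : X -> R) : Prop :=
  Pi f0 f /\ Pi g0 g /\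
  (forall h, (aff_line f g h /\ cone E h) <-> segment u v h) /\
  u <> v.

(* Main.v *)
Require Import Defs.
From Stdlib Require Import Reals.
From Stdlib Require Import Lra Psatz Classical FunctionalExtensionality PropExtensionality.
Open Scope R_scope.

Lemma fext {X:Type} (f g : X -> R) : (forall x, f x = g x) -> f = g.
Proof. intro H; apply functional_extensionality; exact H. Qed.

Lemma fext0 {X:Type} (f : X -> R) : (forall x, f x = 0) -> f = fzero.
Proof. intro H; apply functional_extensionality; intro x; unfold fzero; apply H. Qed.

Lemma fzero_app {X:Type} (x : X) : fzero x = 0.
Proof. reflexivity. Qed.

Lemma nz_ex {X:Type} (f : X -> R) : f <> fzero -> exists x, f x <> 0.
Proof.
  intro H. apply NNPP; intro H'. apply H, fext0; intro x.
  apply NNPP; intro Hx; apply H'; exists x; exact Hx.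
Qed.

Lemma Rabs_ge_neg (a : R) : - a <= Rabs a.
Proof. rewrite <- Rabs_Ropp. apply Rle_abs. Qed.

Lemma comb_E {X:Type} (E : (X -> R) -> Prop) a b u v :
  is_subspace E -> E u -> E v -> E (fadd (fscal a u) (fscal b v)).
Proof. intros [_ [Ha Hs]] Hu Hv. apply Ha; apply Hs; assumption. Qed.

Lemma Pi_np {X:Type} (f0 g0 : X -> R) :
  Pi f0 <> Pi g0 -> forall c, 0 < c -> g0 <> fscal c f0.
Proof.
  intros H c Hc Heq. apply H. apply functional_extensionality; intro h.
  apply propositional_extensionality. unfold Pi, Rrel. split; intros [b [Hb Hh]].
  - exists (b / c). split. apply Rdiv_lt_0_compat; assumption.
    rewrite Hh, Heq. apply fext; intro x; unfold fscal. field. lra.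
  - exists (b * c). split. nra. rewrite Hh, Heq. apply fext; intro x; unfold fscal. ring.
Qed.

Lemma indep_fg {X:Type} (f g : X -> R) :
  (forall x, 0 <= f x) -> (forall x, 0 <= g x) -> f <> fzero -> g <> fzero ->
  (forall c, 0 < c -> g <> fscal c f) ->
  forall s m, (forall x, s * f x + m * (g x - f x) = 0) -> s = 0 /\ m = 0.
Proof.
  intros Hf Hg Hf0 Hg0 Hnp s m H.
  destruct (Req_dec m 0) as [Hm|Hm].
  - subst m. destruct (nz_ex f Hf0) as [x Hx]. specialize (H x). split; [|reflexivity].
    assert (Hsf : s * f x = 0) by lra.
    destruct (Rmult_integral _ _ Hsf) as [Z|Z]; [exact Z|contradiction].
  - exfalso. set (c := (m - s) / m).
    assert (Hgc : forall x, g x = c * f x).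
    { intro x. specialize (H x). unfold c.
      assert (Hmg : m * g x = (m - s) * f x) by nra.
      replace (g x) with (/ m * (m * g x)) by (field; exact Hm).
      rewrite Hmg. field. exact Hm. }
    destruct (Rlt_or_le 0 c) as [Hc|Hc].
    + apply (Hnp c Hc). apply fext; intro x. unfold fscal. apply Hgc.
    + apply Hg0. apply fext0; intro x. specialize (Hgc x). specialize (Hf x). specialize (Hg x).
      apply Rle_antisym; nra.
Qed.

Lemma fg_facts {X:Type} (E : (X -> R) -> Prop) (f0 g0 : X -> R) b b' :
  is_subspace E -> cone E f0 -> cone E g0 -> Pi f0 <> Pi g0 -> 0 < b -> 0 < b' ->
  (forall x, 0 <= fscal b f0 x) /\ (forall x, 0 <= fscal b' g0 x) /\
  fscal b f0 <> fzero /\ fscal b' g0 <> fzero /\ E (fscal b f0) /\ E (fscal b' g0) /\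
  (forall c, 0 < c -> fscal b' g0 <> fscal c (fscal b f0)).
Proof.
  intros HE [Ef0 [Hf0 Nf0]] [Eg0 [Hg0 Ng0]] HPi Hb Hb'.
  destruct HE as [HE0 [HEa HEs]].
  split; [|split; [|split; [|split; [|split; [|split]]]]].
  - intro x; unfold fscal. specialize (Hf0 x); nra.
  - intro x; unfold fscal. specialize (Hg0 x); nra.
  - intro H. apply Nf0. apply fext0; intro x. pose proof (equal_f H x) as Hx.
    rewrite fzero_app in Hx. unfold fscal in Hx.
    destruct (Rmult_integral _ _ Hx); [lra|assumption].
  - intro H. apply Ng0. apply fext0; intro x. pose proof (equal_f H x) as Hx.
    rewrite fzero_app in Hx. unfold fscal in Hx.
    destruct (Rmult_integral _ _ Hx); [lra|assumption].
  - apply HEs; assumption.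
  - apply HEs; assumption.
  - intros c Hc H. apply (Pi_np f0 g0 HPi (c * b / b')).
    + apply Rdiv_lt_0_compat; nra.
    + apply fext; intro x. pose proof (equal_f H x) as Hx. unfold fscal in *.
      replace (g0 x) with (/b' * (b' * g0 x)) by (field; lra). rewrite Hx. field. lra.
Qed.

Lemma cfg_uv {X:Type} (E : (X -> R) -> Prop) (f g u v : X -> R) :
  (forall h, (aff_line f g h /\ cone E h) <-> segment u v h) -> u <> v ->
  exists a0 b0, a0 <> b0 /\ (forall x, u x = f x + a0 * (g x - f x)) /\
     (forall x, v x = f x + b0 * (g x - f x)) /\ cone E u /\ cone E v.
Proof.
  intros Hiff Huv.
  assert (Su : segment u v u).
  { exists 0. split. lra. apply fext; intro x; unfold fadd, fscal. ring. }
  assert (Sv : segment u v v).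
  { exists 1. split. lra. apply fext; intro x; unfold fadd, fscal. ring. }
  apply Hiff in Su. apply Hiff in Sv.
  destruct Su as [[a0 Ha] Cu]. destruct Sv as [[b0 Hb] Cv].
  exists a0, b0. split; [|split; [|split; [|split]]]; try assumption.
  - intro Hab; apply Huv; rewrite Ha, Hb, Hab; reflexivity.
  - intro x; rewrite Ha; unfold fadd, fscal; ring.
  - intro x; rewrite Hb; unfold fadd, fscal; ring.
Qed.

Lemma indep_uv {X:Type} (f g u v : X -> R) a0 b0 :
  (forall x, 0 <= f x) -> (forall x, 0 <= g x) -> f <> fzero -> g <> fzero ->
  (forall c, 0 < c -> g <> fscal c f) -> a0 <> b0 ->
  (forall x, u x = f x + a0 * (g x - f x)) -> (forall x, v x = f x + b0 * (g x - f x)) ->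
  forall al be, (forall x, al * u x + be * v x = 0) -> al = 0 /\ be = 0.
Proof.
  intros Hf Hg Hf0 Hg0 Hnp Hab Hu Hv al be H.
  destruct (indep_fg f g Hf Hg Hf0 Hg0 Hnp (al + be) (al * a0 + be * b0)) as [H1 H2].
  { intro x. specialize (H x). rewrite Hu, Hv in H. nra. }
  replace be with (- al) in H2 by lra.
  assert (Hal : al * (a0 - b0) = 0) by nra.
  destruct (Rmult_integral _ _ Hal) as [Ha|Ha]. split; lra. exfalso; apply Hab; lra.
Qed.

Lemma cfg_bound {X:Type} (E : (X -> R) -> Prop) (f g u v : X -> R) :
  is_subspace E ->
  (forall x, 0 <= f x) -> (forall x, 0 <= g x) -> f <> fzero -> g <> fzero -> E f -> E g ->
  (forall c, 0 < c -> g <> fscal c f) ->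
  (forall h, (aff_line f g h /\ cone E h) <-> segment u v h) -> u <> v ->
  exists K, 0 <= K /\ forall T, (forall x, 0 <= f x + T * (g x - f x)) -> -K <= T <= K.
Proof.
  intros HE Hf Hg Hf0 Hg0 HEf HEg Hnp Hiff Huv.
  destruct (cfg_uv E f g u v Hiff Huv) as [a0 [b0 [Hab [Hu [Hv [Cu Cv]]]]]].
  exists (Rabs a0 + Rabs b0). split.
  { pose proof (Rabs_pos a0); pose proof (Rabs_pos b0); lra. }
  intros T HT.
  set (p := fadd (fscal (1 - T) f) (fscal T g)).
  assert (Hp : forall x, p x = f x + T * (g x - f x)) by (intro x; unfold p, fadd, fscal; ring).
  assert (Sp : segment u v p).
  { apply Hiff. split. exists T; reflexivity. split; [|split].
    - unfold p; apply comb_E; assumption.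
    - intro x; rewrite Hp; apply HT.
    - intro H0. destruct (indep_fg f g Hf Hg Hf0 Hg0 Hnp 1 T) as [H1 _].
      + intro x. pose proof (equal_f H0 x) as Hx. rewrite Hp, fzero_app in Hx. lra.
      + lra. }
  destruct Sp as [s [Hs Hps]].
  destruct (indep_fg f g Hf Hg Hf0 Hg0 Hnp 0 (T - ((1 - s) * a0 + s * b0))) as [_ Hm].
  { intro x. pose proof (equal_f Hps x) as Hx. rewrite Hp in Hx. unfold fadd, fscal in Hx.
    rewrite Hu, Hv in Hx. nra. }
  assert (HT' : T = (1 - s) * a0 + s * b0) by lra.
  pose proof (Rle_abs a0). pose proof (Rle_abs b0).
  pose proof (Rabs_ge_neg a0). pose proof (Rabs_ge_neg b0).
  rewrite HT'. split; nra.
Qed.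

Lemma part3 {X:Type} (E : (X -> R) -> Prop) (f g u v : X -> R) :
  is_subspace E ->
  (forall x, 0 <= f x) -> (forall x, 0 <= g x) -> f <> fzero -> g <> fzero -> E f -> E g ->
  (forall c, 0 < c -> g <> fscal c f) ->
  (forall h, (aff_line f g h /\ cone E h) <-> segment u v h) -> u <> v ->
  forall h1 h2, fadd (fscal h1 u) (fscal h2 v) <> fzero ->
     (cone E (fadd (fscal h1 u) (fscal h2 v)) <-> 0 <= h1 /\ 0 <= h2).
Proof.
  intros HE Hf Hg Hf0 Hg0 HEf HEg Hnp Hiff Huv h1 h2 Hnz.
  destruct (cfg_uv E f g u v Hiff Huv) as [a0 [b0 [Hab [Hu [Hv [Cu Cv]]]]]].
  destruct (cfg_bound E f g u v HE Hf Hg Hf0 Hg0 HEf HEg Hnp Hiff Huv) as [K [HK HB]].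
  set (h := fadd (fscal h1 u) (fscal h2 v)) in *.
  set (sg := h1 + h2). set (m := h1 * a0 + h2 * b0).
  assert (Hh : forall x, h x = sg * f x + m * (g x - f x)).
  { intro x. unfold h, fadd, fscal. rewrite Hu, Hv. unfold sg, m. ring. }
  split.
  - intros [HEh [Hpos _]].
    destruct (Rlt_or_le 0 sg) as [Hsg|Hsg].
    + set (p := fscal (/ sg) h).
      assert (Sp : segment u v p).
      { apply Hiff. split.
        - exists (m / sg). apply fext; intro x. unfold p. unfold fscal at 1. rewrite Hh.
          unfold fadd, fscal. field. lra.
        - split; [|split].
          + unfold p. destruct HE as [_ [_ Hs]]. apply Hs. exact HEh.
          + intro x. unfold p, fscal. specialize (Hpos x).
            apply Rmult_le_pos; [apply Rlt_le, Rinv_0_lt_compat; exact Hsg | exact Hpos].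
          + intro H0. apply Hnz. apply fext0; intro x. pose proof (equal_f H0 x) as Hx.
            rewrite fzero_app in Hx. unfold p, fscal in Hx.
            replace (h x) with (sg * (/ sg * h x)) by (field; lra). rewrite Hx. ring. }
      destruct Sp as [s [Hs Hps]].
      destruct (indep_uv f g u v a0 b0 Hf Hg Hf0 Hg0 Hnp Hab Hu Hv
                  (h1/sg - (1 - s)) (h2/sg - s)) as [H1 H2].
      { intro x. pose proof (equal_f Hps x) as Hx. unfold p, h, fadd, fscal in Hx.
        unfold Rdiv. nra. }
      assert (E1 : h1 = sg * (h1/sg)) by (field; lra).
      assert (E2 : h2 = sg * (h2/sg)) by (field; lra).
      split; nra.
    + exfalso.
      assert (Hmd : forall x, 0 <= m * (g x - f x)).
      { intro x. pose proof (Hpos x) as P. rewrite Hh in P. pose proof (Hf x). nra. }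
      destruct (Rtotal_order m 0) as [Hm|[Hm|Hm]].
      * assert (Hc : forall x, 0 <= f x + - (K + 1) * (g x - f x)).
        { intro x. pose proof (Hmd x). pose proof (Hf x).
          assert (g x - f x <= 0) by nra. nra. }
        specialize (HB _ Hc). lra.
      * assert (Hsf : forall x, h x = sg * f x). { intro x. rewrite Hh, Hm. ring. }
        destruct Hsg as [Hlt|Heq].
        -- apply Hf0. apply fext0; intro x. pose proof (Hpos x) as P; rewrite Hsf in P.
           pose proof (Hf x). apply Rle_antisym; nra.
        -- apply Hnz. apply fext0; intro x. rewrite Hsf, Heq. ring.
      * assert (Hc : forall x, 0 <= f x + (K + 1) * (g x - f x)).
        { intro x. pose proof (Hmd x). pose proof (Hf x).
          assert (0 <= g x - f x) by nra. nra. }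
        specialize (HB _ Hc). lra.
  - intros [H1 H2]. destruct Cu as [EU [PU _]]. destruct Cv as [EV [PV _]].
    split; [|split].
    + apply comb_E; assumption.
    + intro x. unfold h, fadd, fscal. specialize (PU x). specialize (PV x). nra.
    + exact Hnz.
Qed.

Lemma part2 {X:Type} (E : (X -> R) -> Prop) (f g u v : X -> R) :
  is_subspace E ->
  (forall x, 0 <= f x) -> (forall x, 0 <= g x) -> f <> fzero -> g <> fzero -> E f -> E g ->
  (forall c, 0 < c -> g <> fscal c f) ->
  (forall h, (aff_line f g h /\ cone E h) <-> segment u v h) -> u <> v ->
  forall h, cone E h -> span2 u v h ->
        exists p, (segment u v p /\ vline h p) /\
                  (forall q, segment u v q /\ vline h q -> q = p) /\
                  cone E p.
Proof.
  intros HE Hf Hg Hf0 Hg0 HEf HEg Hnp Hiff Huv h Ch [a [b Hh]].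
  destruct (cfg_uv E f g u v Hiff Huv) as [a0 [b0 [Hab [Hu [Hv [Cu Cv]]]]]].
  assert (Hnz : fadd (fscal a u) (fscal b v) <> fzero)
    by (rewrite <- Hh; destruct Ch as [_ [_ N]]; exact N).
  pose proof (proj1 (part3 E f g u v HE Hf Hg Hf0 Hg0 HEf HEg Hnp Hiff Huv a b Hnz)) as Hab'.
  rewrite <- Hh in Hab'. destruct (Hab' Ch) as [Ha Hb].
  assert (Hsg : 0 < a + b).
  { destruct (Rlt_or_le 0 (a+b)) as [P|P]; [exact P|exfalso].
    apply Hnz. apply fext0; intro x. unfold fadd, fscal.
    replace a with 0 by lra. replace b with 0 by lra. ring. }
  set (sg := a + b) in *.
  set (p := fadd (fscal (1 - b/sg) u) (fscal (b/sg) v)).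
  assert (Sp : segment u v p).
  { exists (b/sg). split; [|reflexivity].
    assert (W : b / sg * sg = b) by (field; lra).
    assert (0 <= b/sg) by (apply Rmult_le_pos; [lra| left; apply Rinv_0_lt_compat; lra]).
    assert (b <= sg) by (unfold sg; lra).
    split; nra. }
  exists p. split; [split|split].
  - exact Sp.
  - exists (/sg). rewrite Hh. apply fext; intro x; unfold p, fadd, fscal. unfold sg in *. field. lra.
  - intros q [[s' [Hs' Hq]] [l Hl]].
    destruct (indep_uv f g u v a0 b0 Hf Hg Hf0 Hg0 Hnp Hab Hu Hv
                (1 - s' - l*a) (s' - l*b)) as [Z1 Z2].
    { intro x. pose proof (equal_f Hq x) as X1. pose proof (equal_f Hl x) as X2.
      rewrite Hh in X2. unfold fadd, fscal in X1, X2. nra. }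
    assert (Hls : l * sg = 1) by (unfold sg; nra).
    assert (Hl' : l = / sg).
    { replace l with (l * sg * / sg) by (field; lra). rewrite Hls. ring. }
    rewrite Hl, Hh, Hl'. apply fext; intro x; unfold p, fadd, fscal. unfold sg in *. field. lra.
  - apply Hiff in Sp. destruct Sp; assumption.
Qed.

Lemma sup_closed {X:Type} (p q : X -> R) :
  (forall x, 0 <= p x) -> (exists x, q x < 0) ->
  exists b, 0 <= b /\ (forall x, 0 <= p x + b * q x) /\
            (forall t, (forall x, 0 <= p x + t * q x) -> t <= b).
Proof.
  intros Hp [x0 Hx0].
  set (S := fun t => forall x, 0 <= p x + t * q x).
  assert (Hub : forall x, q x < 0 -> forall t, S t -> t <= - p x / q x).
  { intros x Hq t Ht. specialize (Ht x). set (w := - p x / q x).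
    assert (w * q x = - p x) by (unfold w; field; lra). nra. }
  assert (HS0 : S 0). { intro x. specialize (Hp x). lra. }
  destruct (completeness S) as [b [Hb1 Hb2]].
  { exists (- p x0 / q x0). intros t Ht. apply (Hub x0 Hx0 t Ht). }
  { exists 0. exact HS0. }
  exists b. assert (Hb0 : 0 <= b) by (apply Hb1; exact HS0).
  split; [exact Hb0|split].
  - intro x. apply Rnot_lt_le. intro Hlt.
    assert (Hq : q x < 0).
    { specialize (Hp x). destruct (Rlt_or_le (q x) 0) as [P|P]; auto. nra. }
    assert (Hbw : b <= - p x / q x). { apply Hb2. intros t Ht. apply (Hub x Hq t Ht). }
    set (w := - p x / q x) in *. assert (w * q x = - p x) by (unfold w; field; lra). nra.
  - intros t Ht. apply Hb1. exact Ht.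
Qed.

Lemma choose_r {X:Type} (f0 g0 : X -> R) :
  (forall x, 0 <= f0 x) -> (forall x, 0 <= g0 x) -> f0 <> fzero -> g0 <> fzero ->
  (forall c, 0 < c -> g0 <> fscal c f0) ->
  exists r, 0 < r /\ (exists x, g0 x < r * f0 x) /\ (exists y, r * f0 y < g0 y).
Proof.
  intros Hf Hg Hf0 Hg0 Hnp.
  destruct (nz_ex f0 Hf0) as [x1 Hx1]. assert (Px1 : 0 < f0 x1) by (specialize (Hf x1); lra).
  destruct (nz_ex g0 Hg0) as [y1 Hy1]. assert (Py1 : 0 < g0 y1) by (specialize (Hg y1); lra).
  destruct (classic (exists y, f0 y = 0 /\ 0 < g0 y)) as [[y [Hy1' Hy2']]|HA].
  - exists ((g0 x1 + 1) / f0 x1). split.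
    { apply Rdiv_lt_0_compat; [specialize (Hg x1); lra | exact Px1]. }
    split.
    + exists x1. assert ((g0 x1 + 1)/f0 x1 * f0 x1 = g0 x1 + 1) by (field; lra). lra.
    + exists y. rewrite Hy1', Rmult_0_r. exact Hy2'.
  - destruct (classic (exists x, g0 x = 0 /\ 0 < f0 x)) as [[x [Hx1' Hx2']]|HB].
    + set (w := g0 y1 / (f0 y1 + 1)).
      assert (Hw : 0 < w) by (apply Rdiv_lt_0_compat; [exact Py1| specialize (Hf y1); lra]).
      exists w. split; [exact Hw|split].
      * exists x. rewrite Hx1'. apply Rmult_lt_0_compat; assumption.
      * exists y1. assert (w * (f0 y1 + 1) = g0 y1) by (unfold w; field; specialize (Hf y1); lra).
        nra.
    + set (c := g0 x1 / f0 x1).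
      assert (Pgx1 : 0 < g0 x1).
      { destruct (Hg x1) as [P|P]; auto. exfalso. apply HB. exists x1. split; auto. }
      assert (Hc : 0 < c) by (apply Rdiv_lt_0_compat; assumption).
      assert (Hcx : g0 x1 = c * f0 x1) by (unfold c; field; lra).
      assert (Hex : exists y, g0 y <> c * f0 y).
      { apply NNPP; intro H. apply (Hnp c Hc). apply fext; intro y. unfold fscal.
        apply NNPP; intro H'; apply H; exists y; exact H'. }
      destruct Hex as [y Hy].
      assert (Py : 0 < f0 y).
      { destruct (Hf y) as [P|P]; auto. exfalso.
        destruct (Hg y) as [Q|Q].
        - apply HA. exists y. split; auto.
        - apply Hy. rewrite <- P, <- Q. ring. }
      set (rho := g0 y / f0 y).
      assert (Hry : g0 y = rho * f0 y) by (unfold rho; field; lra).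
      assert (Hrho : 0 <= rho) by (apply Rmult_le_pos; [apply Hg| left; apply Rinv_0_lt_compat; exact Py]).
      assert (Hne : rho <> c) by (intro Z; apply Hy; rewrite Hry, Z; reflexivity).
      exists ((c + rho)/2). split; [lra|].
      destruct (Rlt_or_le rho c) as [L|L].
      * split.
        -- exists y. rewrite Hry. nra.
        -- exists x1. rewrite Hcx. nra.
      * assert (L' : c < rho) by lra. split.
        -- exists x1. rewrite Hcx. nra.
        -- exists y. rewrite Hry. nra.
Qed.

Lemma part1 {X:Type} (E : (X -> R) -> Prop) (f0 g0 : X -> R) :
  is_subspace E -> cone E f0 -> cone E g0 -> Pi f0 <> Pi g0 ->
  exists f g u v, good_config E f0 g0 f g u v.
Proof.
  intros HE Cf0 Cg0 HPi.
  pose proof Cf0 as [Ef0 [Pf0 Nf0]]. pose proof Cg0 as [Eg0 [Pg0 Ng0]].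
  destruct (choose_r f0 g0 Pf0 Pg0 Nf0 Ng0 (Pi_np f0 g0 HPi)) as [r [Hr [[x1 Hx1] [y1 Hy1]]]].
  destruct (fg_facts E f0 g0 r 1 HE Cf0 Cg0 HPi Hr Rlt_0_1)
    as [Hf [Hg [Hf0 [Hg0 [HEf [HEg Hnp]]]]]].
  set (f := fscal r f0) in *. set (g := fscal 1 g0) in *.
  assert (Hgx : forall x, g x = g0 x) by (intro x; unfold g, fscal; ring).
  assert (Hfx : forall x, f x = r * f0 x) by reflexivity.
  destruct (sup_closed f (fun x => g x - f x) Hf) as [b [Hb0 [Hb Hbmax]]].
  { exists x1. rewrite Hgx, Hfx. lra. }
  destruct (sup_closed f (fun x => f x - g x) Hf) as [a' [Ha0 [Ha Hamax]]].
  { exists y1. rewrite Hgx, Hfx. lra. }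
  cbv beta in Hb, Hbmax, Ha, Hamax.
  set (a := - a').
  assert (Hb1 : 1 <= b). { apply Hbmax. intro x. specialize (Hg x). lra. }
  assert (Hab : a < b) by (unfold a; lra).
  assert (Hin : forall t, (forall x, 0 <= f x + t * (g x - f x)) -> a <= t <= b).
  { intros t Ht. split.
    - assert (-t <= a'). { apply Hamax. intro x. specialize (Ht x). nra. }
      unfold a. lra.
    - apply Hbmax; exact Ht. }
  assert (Hconv : forall t, a <= t <= b -> forall x, 0 <= f x + t * (g x - f x)).
  { intros t [Hat Htb] x. specialize (Hb x). specialize (Ha x). unfold a in Hat.
    destruct (Rle_or_lt 0 (g x - f x)); nra. }
  set (L := fun t => fadd (fscal (1 - t) f) (fscal t g)).
  assert (HL : forall t x, L t x = f x + t * (g x - f x))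
    by (intros; unfold L, fadd, fscal; ring).
  exists f, g, (L a), (L b).
  unfold good_config. split; [|split; [|split]].
  - unfold Pi, Rrel. exists r. split; [exact Hr| reflexivity].
  - unfold Pi, Rrel. exists 1. split; [lra| reflexivity].
  - intro h. split.
    + intros [[t Ht] [HEh [Hpos Hnz]]].
      assert (Hth : forall x, h x = f x + t * (g x - f x))
        by (intro x; rewrite Ht; unfold fadd, fscal; ring).
      destruct (Hin t) as [Hat Htb]. { intro x. rewrite <- Hth. apply Hpos. }
      exists ((t - a)/(b - a)). split.
      * set (w := (t - a)/(b - a)).
        assert (w * (b - a) = t - a) by (unfold w; field; lra).
        split; nra.
      * apply fext; intro x. rewrite Hth. unfold fadd, fscal. rewrite !HL. field. lra.
    + intros [s [Hs Hh]].
      set (t := (1 - s) * a + s * b).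
      assert (Hth : forall x, h x = f x + t * (g x - f x))
        by (intro x; rewrite Hh; unfold fadd, fscal; rewrite !HL; unfold t; ring).
      split; [|split; [|split]].
      * exists t. apply fext; intro x. rewrite Hth. unfold fadd, fscal. ring.
      * rewrite Hh. unfold L. apply comb_E; [exact HE| apply comb_E; assumption | apply comb_E; assumption].
      * intro x. rewrite Hth. apply Hconv. unfold t; split; nra.
      * intro H0. destruct (indep_fg f g Hf Hg Hf0 Hg0 Hnp 1 t) as [H1 _].
        -- intro x. pose proof (equal_f H0 x) as Hx. rewrite Hth, fzero_app in Hx. lra.
        -- lra.
  - intro Heq. destruct (indep_fg f g Hf Hg Hf0 Hg0 Hnp 0 (a - b)) as [_ Hm].
    + intro x. pose proof (equal_f Heq x) as Hx. rewrite !HL in Hx. nra.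
    + lra.
Qed.

Theorem mainTheorem3 (X : Type) (E : (X -> R) -> Prop) (f0 g0 : X -> R) :
  is_subspace E -> cone E f0 -> cone E g0 -> Pi f0 <> Pi g0 ->
  (exists f g u v, good_config E f0 g0 f g u v) /\
  (forall f g u v, good_config E f0 g0 f g u v ->
     (forall h, cone E h -> span2 u v h ->
        exists p, (segment u v p /\ vline h p) /\
                  (forall q, segment u v q /\ vline h q -> q = p) /\
                  cone E p) /\
     (forall h1 h2, fadd (fscal h1 u) (fscal h2 v) <> fzero ->
        (cone E (fadd (fscal h1 u) (fscal h2 v)) <-> 0 <= h1 /\ 0 <= h2))).
Proof.
  intros HE Cf0 Cg0 HPi. split.
  - apply part1; assumption.
  - intros f g u v [[b [Hb Hfb]] [[b' [Hb' Hgb]] [Hiff Huv]]].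
    destruct (fg_facts E f0 g0 b b' HE Cf0 Cg0 HPi Hb Hb')
      as [Hf [Hg [Hf0 [Hg0 [HEf [HEg Hnp]]]]]].
    subst f g. split.
    + exact (part2 E _ _ u v HE Hf Hg Hf0 Hg0 HEf HEg Hnp Hiff Huv).
    + exact (part3 E _ _ u v HE Hf Hg Hf0 Hg0 HEf HEg Hnp Hiff Huv).
Qed.
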